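(* Let $n\ge 3$ and let $C\in\mathbb{R}^{n\times n}$ be nonnegative, doubly stochastic, irreducible, with zero diagonal entries. Let $x(s)$ evolve by the Modified DeGroot-Friedkin model $x(s+1)=C^\top x(s)+X(s)x(s)-C^\top X(s)x(s)$, $X(s)=\mathrm{diag}(x(s))$. Then for every initial condition $x(0)\in\Delta\setminus\{e_1,\dots,e_n\}$, $x(s)\to\tfrac1n\mathbf 1$ as $s\to\infty$.
   Context: $\Delta=\{x\in\mathbb{R}^n: x\ge 0,\ \sum_i x_i=1\}$; $e_i$ is the $i$th standard basis vector; $\mathbf 1$ is the all-ones vector. *)

(* Defs.v *)
From Stdlib Require Import Reals.
Open Scope R_scope.

(* Vectors in R^n are functions nat -> R (only indices < n matter);
   n x n matrices are functions nat -> nat -> R (only indices < n matter). *)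

Fixpoint vsum (n : nat) (f : nat -> R) : R :=
  match n with
  | O => 0
  | S m => vsum m f + f m
  end.

Definition mmul (n : nat) (A B : nat -> nat -> R) : nat -> nat -> R :=
  fun i j => vsum n (fun k => A i k * B k j).

Definition mid : nat -> nat -> R := fun i j => if Nat.eqb i j then 1 else 0.

Fixpoint mpow (n : nat) (C : nat -> nat -> R) (k : nat) : nat -> nat -> R :=
  match k with
  | O => mid
  | S k' => mmul n (mpow n C k') C
  end.

Definition nonneg_mat (n : nat) (C : nat -> nat -> R) : Prop :=
  forall i j, (i < n)%nat -> (j < n)%nat -> 0 <= C i j.

Definition doubly_stochastic (n : nat) (C : nat -> nat -> R) : Prop :=
  nonneg_mat n C /\
  (forall i, (i < n)%nat -> vsum n (fun j => C i j) = 1) /\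
  (forall j, (j < n)%nat -> vsum n (fun i => C i j) = 1).

Definition irreducible (n : nat) (C : nat -> nat -> R) : Prop :=
  forall i j, (i < n)%nat -> (j < n)%nat -> exists k : nat, 0 < mpow n C k i j.

Definition zero_diag (n : nat) (C : nat -> nat -> R) : Prop :=
  forall i, (i < n)%nat -> C i i = 0.

Definition in_simplex (n : nat) (x : nat -> R) : Prop :=
  (forall i, (i < n)%nat -> 0 <= x i) /\ vsum n x = 1.

Definition is_basis_vec (n : nat) (k : nat) (x : nat -> R) : Prop :=
  forall i, (i < n)%nat -> x i = if Nat.eqb i k then 1 else 0.

(* One step of the modified DeGroot-Friedkin model, component i:
   (C^T x + X x - C^T X x)_i with X = diag(x). *)
Definition mdf_step (n : nat) (C : nat -> nat -> R) (x : nat -> R) : nat -> R :=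
  fun i => vsum n (fun j => C j i * x j) + x i * x i
           - vsum n (fun j => C j i * (x j * x j)).

(* Main.v *)
Require Import Defs.
From Stdlib Require Import Reals Lra Lia Classical.
Open Scope R_scope.

Lemma vsum_ext n f g : (forall i, (i < n)%nat -> f i = g i) -> vsum n f = vsum n g.
Proof. induction n; simpl; intros H; auto. rewrite IHn by (intros; apply H; lia). rewrite H by lia. reflexivity. Qed.

Lemma vsum_plus n f g : vsum n (fun i => f i + g i) = vsum n f + vsum n g.
Proof. induction n; simpl; [lra|]. rewrite IHn; lra. Qed.

Lemma vsum_minus n f g : vsum n (fun i => f i - g i) = vsum n f - vsum n g.
Proof. induction n; simpl; [lra|]. rewrite IHn; lra. Qed.

Lemma vsum_scal n c f : vsum n (fun i => c * f i) = c * vsum n f.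
Proof. induction n; simpl; [lra|]. rewrite IHn; lra. Qed.

Lemma vsum_le n f g : (forall i, (i < n)%nat -> f i <= g i) -> vsum n f <= vsum n g.
Proof. induction n; simpl; intros H; [lra|]. assert (f n <= g n) by (apply H; lia).
  assert (vsum n f <= vsum n g) by (apply IHn; intros; apply H; lia). lra. Qed.

Lemma vsum_const n c : vsum n (fun _ => c) = INR n * c.
Proof. induction n; simpl vsum; [simpl; lra|]. rewrite IHn, S_INR; lra. Qed.

Lemma vsum_swap n m F : vsum n (fun i => vsum m (fun j => F i j)) = vsum m (fun j => vsum n (fun i => F i j)).
Proof. induction n; simpl.
  - induction m; simpl; [lra|]. rewrite <- IHm; lra.
  - rewrite IHn. rewrite <- vsum_plus. reflexivity. Qed.

Lemma vsum_single n a f : (a < n)%nat -> vsum n (fun i => if Nat.eqb i a then f i else 0) = f a.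
Proof. induction n; intros H; [lia|]. simpl.
  destruct (Nat.eq_dec a n) as [->|Hne].
  - rewrite Nat.eqb_refl. rewrite (vsum_ext _ _ (fun _ => 0)).
    + rewrite vsum_const; lra.
    + intros i Hi. destruct (Nat.eqb_spec i n); [lia|auto].
  - rewrite IHn by lia. destruct (Nat.eqb_spec n a); [lia|lra]. Qed.

Lemma vsum_ge2 n f a b : (forall i, (i < n)%nat -> 0 <= f i) -> (a < n)%nat -> (b < n)%nat -> a <> b ->
  f a + f b <= vsum n f.
Proof. intros H Ha Hb Hab.
  rewrite <- (vsum_single n a f), <- (vsum_single n b f) by auto. rewrite <- vsum_plus.
  apply vsum_le. intros i Hi. specialize (H i Hi).
  destruct (Nat.eqb_spec i a); destruct (Nat.eqb_spec i b); subst; try lia; lra. Qed.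

Lemma vsum_ge3 n f a b c : (forall i, (i < n)%nat -> 0 <= f i) -> (a < n)%nat -> (b < n)%nat -> (c < n)%nat ->
  a <> b -> a <> c -> b <> c ->
  f a + f b + f c <= vsum n f.
Proof. intros H Ha Hb Hc Hab Hac Hbc.
  rewrite <- (vsum_single n a f), <- (vsum_single n b f), <- (vsum_single n c f) by auto.
  rewrite <- !vsum_plus.
  apply vsum_le. intros i Hi. specialize (H i Hi).
  destruct (Nat.eqb_spec i a); destruct (Nat.eqb_spec i b); destruct (Nat.eqb_spec i c); subst; try lia; lra. Qed.

Lemma argmax n (f : nat -> R) : (0 < n)%nat -> exists p, (p < n)%nat /\ forall j, (j < n)%nat -> f j <= f p.
Proof. induction n; intros H; [lia|]. destruct n.
  - exists 0%nat. split; [lia|]. intros j Hj. replace j with 0%nat by lia. lra.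
  - destruct IHn as [p [Hp Hmax]]; [lia|].
    destruct (Rle_dec (f (S n)) (f p)).
    + exists p. split; [lia|]. intros j Hj. destruct (Nat.eq_dec j (S n)); [subst; auto|]. apply Hmax; lia.
    + exists (S n). split; [lia|]. intros j Hj. destruct (Nat.eq_dec j (S n)); [subst; lra|].
      specialize (Hmax j ltac:(lia)). lra. Qed.

Fixpoint vmin (m : nat) (f : nat -> R) : R :=
  match m with O => f O | S k => Rmin (vmin k f) (f (S k)) end.

Lemma vmin_le m f i : (i <= m)%nat -> vmin m f <= f i.
Proof. induction m; intros H; simpl.
  - replace i with 0%nat by lia. lra.
  - destruct (Nat.eq_dec i (S m)); [subst; apply Rmin_r|].
    eapply Rle_trans; [apply Rmin_l|]. apply IHm; lia. Qed.

Lemma vmin_att m f : exists i, (i <= m)%nat /\ vmin m f = f i.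
Proof. induction m; simpl.
  - exists 0%nat; split; auto.
  - destruct IHm as [i [Hi E]]. unfold Rmin. destruct (Rle_dec (vmin m f) (f (S m))).
    + exists i; split; [lia|auto].
    + exists (S m); split; auto. Qed.

Lemma pow_le_one_dec b k K : 0 <= b <= 1 -> (k <= K)%nat -> b ^ K <= b ^ k.
Proof. intros Hb HK. replace K with (k + (K - k))%nat by lia. rewrite pow_add.
  assert (0 <= b ^ k) by (apply pow_le; lra).
  assert (b ^ (K - k) <= 1). { induction (K - k)%nat; simpl; [lra|]. nra. }
  assert (0 <= b ^ (K-k)) by (apply pow_le; lra). nra. Qed.

Lemma step_form n C x i : mdf_step n C x i = x i * x i + vsum n (fun j => C j i * (x j - x j * x j)).
Proof. unfold mdf_step.
  rewrite (vsum_ext n (fun j => C j i * (x j - x j * x j)) (fun j => C j i * x j - C j i * (x j * x j)))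
    by (intros; ring). rewrite vsum_minus. ring. Qed.

Lemma step_sum n C x : (forall j, (j < n)%nat -> vsum n (fun i => C j i) = 1) ->
  vsum n x = 1 -> vsum n (mdf_step n C x) = 1.
Proof. intros Hrow Hx. unfold mdf_step.
  rewrite vsum_minus, vsum_plus.
  rewrite (vsum_swap n n (fun i j => C j i * x j)).
  rewrite (vsum_swap n n (fun i j => C j i * (x j * x j))).
  rewrite (vsum_ext n (fun j => vsum n (fun i => C j i * x j)) x).
  2:{ intros j Hj. rewrite (vsum_ext n _ (fun i => x j * C j i)) by (intros; ring).
      rewrite vsum_scal, Hrow by auto. ring. }
  rewrite (vsum_ext n (fun j => vsum n (fun i => C j i * (x j * x j))) (fun j => x j * x j)).
  2:{ intros j Hj. rewrite (vsum_ext n _ (fun i => (x j * x j) * C j i)) by (intros; ring).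
      rewrite vsum_scal, Hrow by auto. ring. }
  lra. Qed.

Lemma step_max n C x p : (2 <= n)%nat -> nonneg_mat n C ->
  (forall i, (i < n)%nat -> vsum n (fun j => C j i) = 1) ->
  (forall i, (i < n)%nat -> 0 <= x i) -> vsum n x = 1 ->
  (p < n)%nat -> (forall j, (j < n)%nat -> x j <= x p) ->
  forall i, (i < n)%nat -> mdf_step n C x i <= x p.
Proof. intros Hn HC Hcol Hx0 Hx1 Hp Hmax i Hi. rewrite step_form.
  assert (vsum n (fun j => C j i * (x j - x j * x j)) <= vsum n (fun j => C j i * (x p - x p * x p))).
  { apply vsum_le. intros j Hj. apply Rmult_le_compat_l; [apply HC; auto|].
    destruct (Nat.eq_dec j p); [subst; lra|].
    assert (x j + x p <= 1) by (rewrite <- Hx1; apply vsum_ge2; auto).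
    assert (0 <= (x p - x j) * (1 - x p - x j)) by (apply Rmult_le_pos; specialize (Hmax j Hj); lra).
    assert ((x p - x j) * (1 - x p - x j) = (x p - x p * x p) - (x j - x j * x j)) by ring.
    lra. }
  rewrite (vsum_ext n (fun j => C j i * (x p - x p * x p)) (fun j => (x p - x p * x p) * C j i)) in H
    by (intros; ring).
  rewrite vsum_scal, Hcol in H by auto.
  specialize (Hmax i Hi). specialize (Hx0 i Hi).
  assert (x i * x i <= x p * x p) by (apply Rmult_le_compat; lra). lra. Qed.

Lemma step_min n C x c b : nonneg_mat n C ->
  (forall i, (i < n)%nat -> vsum n (fun j => C j i) = 1) ->
  0 <= c -> (forall j, (j < n)%nat -> c <= x j) ->
  (forall j, (j < n)%nat -> b <= 1 - x j - c) ->
  forall i, (i < n)%nat ->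
  (x i - c) ^ 2 + b * vsum n (fun j => C j i * (x j - c)) <= mdf_step n C x i - c.
Proof. intros HC Hcol Hc Hxc Hb i Hi. rewrite step_form.
  assert (E : c = c * c + vsum n (fun j => C j i * (c - c * c))).
  { rewrite (vsum_ext n _ (fun j => (c - c * c) * C j i)) by (intros; ring).
    rewrite vsum_scal, Hcol by auto. ring. }
  assert (vsum n (fun j => b * (C j i * (x j - c))) <=
          vsum n (fun j => C j i * (x j - x j * x j)) - vsum n (fun j => C j i * (c - c * c))).
  { rewrite <- vsum_minus. apply vsum_le. intros j Hj.
    specialize (HC j i Hj Hi). specialize (Hxc j Hj). specialize (Hb j Hj).
    assert (0 <= C j i * (x j - c)) by (apply Rmult_le_pos; lra).
    assert (C j i * (x j - x j * x j) - C j i * (c - c * c) = (C j i * (x j - c)) * (1 - x j - c)) as H1 by ring.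
    rewrite H1. rewrite (Rmult_comm b). apply Rmult_le_compat_l; lra. }
  rewrite vsum_scal in H.
  specialize (Hxc i Hi).
  assert (0 <= c * (x i - c)) by (apply Rmult_le_pos; lra).
  assert ((x i - c) ^ 2 = x i * x i - c * c - 2 * (c * (x i - c))) by ring.
  lra. Qed.

Lemma fin_unif m (P : nat -> nat -> R -> Prop) :
 (forall i K p K' p', P i K p -> (K <= K')%nat -> 0 < p' <= p -> P i K' p') ->
 (forall i, (i < m)%nat -> exists K p, 0 < p <= 1 /\ P i K p) ->
 exists K p, 0 < p <= 1 /\ forall i, (i < m)%nat -> P i K p.
Proof. intros Hmono. induction m; intros H.
  - exists 0%nat, 1. split; [lra|]. intros; lia.
  - destruct IHm as [K1 [p1 [Hp1 H1]]]; [intros; apply H; lia|].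
    destruct (H m ltac:(lia)) as [K2 [p2 [Hp2 H2]]].
    exists (Nat.max K1 K2), (Rmin p1 p2). split.
    + split; [apply Rmin_glb_lt; lra|]. eapply Rle_trans; [apply Rmin_l|lra].
    + intros i Hi. destruct (Nat.eq_dec i m).
      * subst. eapply Hmono; [apply H2|lia|]. split; [apply Rmin_glb_lt; lra|apply Rmin_r].
      * eapply Hmono; [apply H1; lia|lia|]. split; [apply Rmin_glb_lt; lra|apply Rmin_l]. Qed.

Lemma unif_irred n C : irreducible n C ->
  exists K p, 0 < p <= 1 /\ forall i j, (i < n)%nat -> (j < n)%nat ->
    exists k, (k <= K)%nat /\ p <= mpow n C k i j.
Proof. intros Hirr.
  destruct (fin_unif n (fun i K p => forall j, (j < n)%nat -> exists k, (k <= K)%nat /\ p <= mpow n C k i j))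
    as [K [p [Hp HK]]].
  - intros i K p K' p' Hi HKK Hpp j Hj. destruct (Hi j Hj) as [k [Hk Hpk]]. exists k; split; [lia|lra].
  - intros i Hi. apply (fin_unif n (fun j K p => exists k, (k <= K)%nat /\ p <= mpow n C k i j)).
    + intros j K p K' p' [k [Hk Hpk]] HKK Hpp. exists k; split; [lia|lra].
    + intros j Hj. destruct (Hirr i j Hi Hj) as [k Hk]. exists k, (Rmin (mpow n C k i j) 1).
      split; [split; [apply Rmin_glb_lt; lra|apply Rmin_r]|]. exists k; split; [lia|apply Rmin_l].
  - exists K, p. split; auto. Qed.

Definition Hyp n C (x : nat -> nat -> R) a :=
  (3 <= n)%nat /\ nonneg_mat n C /\
  (forall j, (j < n)%nat -> vsum n (fun i => C j i) = 1) /\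
  (forall i, (i < n)%nat -> vsum n (fun j => C j i) = 1) /\
  (forall s i, (i < n)%nat -> x (S s) i = mdf_step n C (x s) i) /\
  (forall i, (i < n)%nat -> 0 <= x O i) /\ vsum n (x O) = 1 /\
  (forall i, (i < n)%nat -> x O i <= a) /\ a < 1.

Lemma traj_inv n C x a : Hyp n C x a -> forall t,
  (forall i, (i < n)%nat -> 0 <= x t i) /\ vsum n (x t) = 1 /\ (forall i, (i < n)%nat -> x t i <= a).
Proof. intros (Hn & HC & Hrow & Hcol & Hst & H0 & H1 & Ha & Ha1).
  induction t as [|t [IH0 [IH1 IHa]]]; [auto|].
  split; [|split].
  - intros i Hi. rewrite Hst, step_form by auto.
    assert (0 <= vsum n (fun j => C j i * (x t j - x t j * x t j))).
    { rewrite <- (Rmult_0_r (INR n)), <- vsum_const. apply vsum_le. intros j Hj.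
      apply Rmult_le_pos; [apply HC; auto|]. specialize (IH0 j Hj); specialize (IHa j Hj).
      assert (0 <= x t j * (1 - x t j)) by (apply Rmult_le_pos; lra). lra. }
    assert (0 <= x t i * x t i) by (apply Rmult_le_pos; apply IH0; auto). lra.
  - rewrite (vsum_ext n (x (S t)) (mdf_step n C (x t))) by (intros; apply Hst; auto).
    apply step_sum; auto.
  - intros i Hi. destruct (argmax n (x t)) as [p [Hp Hmax]]; [lia|].
    rewrite Hst by auto. eapply Rle_trans; [eapply step_max; eauto; lia|]. apply IHa; auto. Qed.

Definition mu n (x : nat -> nat -> R) t := vmin (n - 1) (x t).

Lemma mu_le n x t i : (i < n)%nat -> mu n x t <= x t i.
Proof. intros. unfold mu. apply vmin_le. lia. Qed.

Lemma mu_att n x t : (0 < n)%nat -> exists i, (i < n)%nat /\ mu n x t = x t i.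
Proof. intros. unfold mu. destruct (vmin_att (n-1) (x t)) as [i [Hi E]]. exists i. split; [lia|auto]. Qed.

Lemma mu_nonneg n C x a : Hyp n C x a -> forall t, 0 <= mu n x t.
Proof. intros H t. pose proof (traj_inv n C x a H t) as [H0 _]. destruct H as [Hn _].
  destruct (mu_att n x t) as [i [Hi E]]; [lia|]. rewrite E. auto. Qed.

Lemma mu_beta n C x a : Hyp n C x a -> forall t j, (j < n)%nat -> (1 - a) / 2 <= 1 - x t j - mu n x t.
Proof. intros H t j Hj. pose proof (traj_inv n C x a H t) as [H0 [H1 Ha]]. destruct H as [Hn _].
  assert (exists k1 k2, (k1 < n)%nat /\ (k2 < n)%nat /\ j <> k1 /\ j <> k2 /\ k1 <> k2) as [k1 [k2 Hk]].
  { destruct j as [|[|j]]; [exists 1%nat, 2%nat|exists 0%nat, 2%nat|exists 0%nat, 1%nat]; lia. }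
  destruct Hk as (Hk1 & Hk2 & Hj1 & Hj2 & H12).
  pose proof (vsum_ge3 n (x t) j k1 k2 H0 Hj Hk1 Hk2 Hj1 Hj2 H12).
  pose proof (mu_le n x t k1 Hk1). pose proof (mu_le n x t k2 Hk2). specialize (Ha j Hj). lra. Qed.

Lemma mu_upper n C x a : Hyp n C x a -> forall t, INR n * mu n x t <= 1.
Proof. intros H t. pose proof (traj_inv n C x a H t) as [H0 [H1 Ha]].
  rewrite <- vsum_const, <- H1. apply vsum_le. intros; apply mu_le; auto. Qed.

Lemma u_step n C x a : Hyp n C x a -> forall c t, 0 <= c -> c <= mu n x t -> forall i, (i < n)%nat ->
  (x t i - c) ^ 2 + (1 - a) / 2 * vsum n (fun j => C j i * (x t j - c)) <= x (S t) i - c.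
Proof. intros H c t Hc Hct i Hi. pose proof H as (Hn & HC & Hrow & Hcol & Hst & _).
  rewrite Hst by auto. apply step_min; auto.
  - intros j Hj. pose proof (mu_le n x t j Hj). lra.
  - intros j Hj. pose proof (mu_beta n C x a H t j Hj). lra. Qed.

Lemma mu_step n C x a : Hyp n C x a -> forall t, mu n x t <= mu n x (S t).
Proof. intros H t. pose proof H as (Hn & HC & _). pose proof (traj_inv n C x a H t) as [H0 _].
  destruct (mu_att n x (S t)) as [i [Hi E]]; [lia|]. rewrite E.
  pose proof (u_step n C x a H (mu n x t) t (mu_nonneg n C x a H t) (Rle_refl _) i Hi).
  assert (0 <= vsum n (fun j => C j i * (x t j - mu n x t))).
  { rewrite <- (Rmult_0_r (INR n)), <- vsum_const. apply vsum_le. intros j Hj.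
    apply Rmult_le_pos; [apply HC; auto|]. pose proof (mu_le n x t j Hj); lra. }
  assert (0 <= (1 - a) / 2) by (destruct H as (_&_&_&_&_&_&_&_&Ha1); lra).
  assert (0 <= (x t i - mu n x t) ^ 2) by (apply pow2_ge_0).
  assert (0 <= (1 - a) / 2 * vsum n (fun j => C j i * (x t j - mu n x t))) by (apply Rmult_le_pos; auto).
  lra. Qed.

Lemma mu_mono n C x a : Hyp n C x a -> forall t m, mu n x t <= mu n x (t + m).
Proof. intros H t m. induction m. rewrite Nat.add_0_r; lra.
  rewrite Nat.add_succ_r. pose proof (mu_step n C x a H (t + m)). lra. Qed.

Lemma path_bound n C x a : Hyp n C x a -> forall s i, (i < n)%nat -> forall k j, (j < n)%nat ->
  ((1 - a) / 2) ^ k * mpow n C k i j * (x s i - mu n x s) <= x (s + k)%nat j - mu n x s.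
Proof. intros H s i Hi. pose proof H as (Hn & HC & _ & _ & _ & _ & _ & _ & Ha1).
  set (b := (1 - a) / 2). set (c := mu n x s).
  assert (Hb : 0 <= b) by (unfold b; lra).
  assert (Hc : 0 <= c) by apply (mu_nonneg n C x a H).
  induction k; intros j Hj.
  - rewrite Nat.add_0_r. simpl. unfold mid. destruct (Nat.eqb_spec i j).
    + subst. lra.
    + pose proof (mu_le n x s j Hj). unfold c. lra.
  - rewrite Nat.add_succ_r.
    assert (Hcm : c <= mu n x (s + k)) by apply (mu_mono n C x a H).
    pose proof (u_step n C x a H c (s + k)%nat Hc Hcm j Hj) as Hu.
    assert (E : b ^ S k * mpow n C (S k) i j * (x s i - c) =
      b * vsum n (fun l => C l j * (b ^ k * mpow n C k i l * (x s i - c)))).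
    { simpl mpow. unfold mmul.
      rewrite (vsum_ext n (fun l => C l j * (b ^ k * mpow n C k i l * (x s i - c)))
                 (fun l => (b ^ k * (x s i - c)) * (mpow n C k i l * C l j))) by (intros; ring).
      rewrite vsum_scal. simpl. ring. }
    rewrite E.
    assert (vsum n (fun l => C l j * (b ^ k * mpow n C k i l * (x s i - c))) <=
            vsum n (fun l => C l j * (x (s + k)%nat l - c))).
    { apply vsum_le. intros l Hl. apply Rmult_le_compat_l; [apply HC; auto|]. apply IHk; auto. }
    assert (0 <= (x (s + k)%nat j - c) ^ 2) by apply pow2_ge_0.
    assert (b * vsum n (fun l => C l j * (b ^ k * mpow n C k i l * (x s i - c))) <=
            b * vsum n (fun l => C l j * (x (s + k)%nat l - c))) by (apply Rmult_le_compat_l; auto).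
    unfold b in *. lra. Qed.

Lemma sq_bound n C x a : Hyp n C x a -> forall c t0, 0 <= c -> c <= mu n x t0 ->
  forall m j w, (j < n)%nat -> 0 <= w -> w <= x t0 j - c -> w ^ (2 ^ m) <= x (t0 + m)%nat j - c.
Proof. intros H c t0 Hc Hct m. induction m; intros j w Hj Hw Hwx.
  - simpl. rewrite Nat.add_0_r. lra.
  - rewrite Nat.add_succ_r.
    assert (Hcm : c <= mu n x (t0 + m)). { pose proof (mu_mono n C x a H t0 m). lra. }
    pose proof (u_step n C x a H c (t0 + m)%nat Hc Hcm j Hj) as Hu.
    pose proof H as (Hn & HC & _ & _ & _ & _ & _ & _ & Ha1).
    assert (0 <= vsum n (fun l => C l j * (x (t0 + m)%nat l - c))).
    { rewrite <- (Rmult_0_r (INR n)), <- vsum_const. apply vsum_le. intros l Hl.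
      apply Rmult_le_pos; [apply HC; auto|]. pose proof (mu_le n x (t0+m) l Hl); lra. }
    assert (0 <= (1 - a) / 2 * vsum n (fun l => C l j * (x (t0 + m)%nat l - c))) by (apply Rmult_le_pos; lra).
    assert (w ^ (2 ^ m) <= x (t0 + m)%nat j - c) by (apply IHm; auto).
    assert (0 <= w ^ (2 ^ m)) by (apply pow_le; auto).
    assert (E : w ^ (2 ^ S m) = w ^ (2 ^ m) * w ^ (2 ^ m)).
    { rewrite <- pow_add. f_equal. rewrite Nat.pow_succ_r'. lia. }
    rewrite E.
    assert (w ^ (2 ^ m) * w ^ (2 ^ m) <= (x (t0 + m)%nat j - c) ^ 2).
    { simpl. rewrite Rmult_1_r. apply Rmult_le_compat; auto. }
    lra. Qed.

Lemma key n C x a K p : Hyp n C x a -> 0 < p <= 1 ->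
  (forall i j, (i < n)%nat -> (j < n)%nat -> exists k, (k <= K)%nat /\ p <= mpow n C k i j) ->
  forall s i, (i < n)%nat ->
  (((1 - a) / 2) ^ K * p * (x s i - mu n x s)) ^ (2 ^ K) <= mu n x (s + K)%nat - mu n x s.
Proof. intros H Hp HK s i Hi. pose proof H as (Hn & HC & _ & _ & _ & _ & _ & _ & Ha1).
  set (b := (1 - a) / 2). set (c := mu n x s).
  assert (Ha0 : 0 <= a).
  { pose proof (traj_inv n C x a H s) as [H0 [_ Hxa0]]. specialize (H0 0%nat ltac:(lia)).
    specialize (Hxa0 0%nat ltac:(lia)). lra. }
  assert (Hb : 0 <= b <= 1) by (unfold b; lra).
  assert (Hc : 0 <= c) by apply (mu_nonneg n C x a H).
  pose proof (traj_inv n C x a H s) as [_ [_ Hxa]].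
  assert (Hd : 0 <= x s i - c <= 1). { pose proof (mu_le n x s i Hi). specialize (Hxa i Hi). unfold c in *; lra. }
  set (w := b ^ K * p * (x s i - c)).
  assert (HbK : 0 <= b ^ K <= 1).
  { split; [apply pow_le; lra|]. rewrite <- (pow1 K). apply pow_incr. lra. }
  assert (Hw : 0 <= w <= 1).
  { unfold w. split. apply Rmult_le_pos; [apply Rmult_le_pos|]; lra.
    assert (b ^ K * p <= 1 * 1) by (apply Rmult_le_compat; lra).
    assert (b ^ K * p * (x s i - c) <= 1 * 1) by (apply Rmult_le_compat; try lra; apply Rmult_le_pos; lra).
    lra. }
  destruct (mu_att n x (s + K)%nat) as [j [Hj E]]; [lia|]. rewrite E.
  destruct (HK i j Hi Hj) as [k [Hk Hpk]].
  pose proof (path_bound n C x a H s i Hi k j Hj) as Hpath. fold b c in Hpath.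
  assert (Hwk : w <= x (s + k)%nat j - c).
  { eapply Rle_trans; [|apply Hpath]. unfold w.
    apply Rmult_le_compat_r; [lra|]. apply Rmult_le_compat; try lra.
    apply pow_le_one_dec; auto. }
  assert (Hcm : c <= mu n x (s + k)) by apply (mu_mono n C x a H).
  pose proof (sq_bound n C x a H c (s + k)%nat Hc Hcm (K - k)%nat j w Hj (proj1 Hw) Hwk) as Hsq.
  replace (s + k + (K - k))%nat with (s + K)%nat in Hsq by lia.
  eapply Rle_trans; [|apply Hsq]. apply pow_le_one_dec; auto.
  apply Nat.pow_le_mono_r; lia. Qed.

Theorem theorem4 (n : nat) (C : nat -> nat -> R) (x : nat -> nat -> R) :
  (3 <= n)%nat ->
  nonneg_mat n C ->
  doubly_stochastic n C ->
  irreducible n C ->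
  zero_diag n C ->
  (forall s i, (i < n)%nat -> x (S s) i = mdf_step n C (x s) i) ->
  in_simplex n (x O) ->
  (forall k, (k < n)%nat -> ~ is_basis_vec n k (x O)) ->
  forall i, (i < n)%nat -> Un_cv (fun s => x s i) (1 / INR n).
Proof.
  intros Hn HC [_ [Hrow Hcol]] Hirr _ Hst [H0 H1] Hnb i0 Hi0.
  destruct (argmax n (x O)) as [p [Hp Hmax]]; [lia|].
  set (a := x O p).
  assert (Ha1 : a < 1).
  { destruct (Rlt_dec a 1) as [|Hge]; auto. exfalso. apply (Hnb p Hp).
    assert (Hoth : forall j, (j < n)%nat -> j <> p -> x O j = 0).
    { intros j Hj Hjp. pose proof (vsum_ge2 n (x O) j p H0 Hj Hp Hjp). specialize (H0 j Hj).
      unfold a in Hge. lra. }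
    assert (a <= 1).
    { destruct (Nat.eq_dec p 0) as [E|E].
      - pose proof (vsum_ge2 n (x O) p 1 H0 Hp ltac:(lia) ltac:(lia)). specialize (H0 1%nat ltac:(lia)). unfold a; lra.
      - pose proof (vsum_ge2 n (x O) p 0 H0 Hp ltac:(lia) E). specialize (H0 0%nat ltac:(lia)). unfold a; lra. }
    intros j Hj. destruct (Nat.eqb_spec j p).
    + subst. unfold a in *. lra.
    + apply Hoth; auto. }
  assert (H : Hyp n C x a).
  { repeat split; auto; intros; apply Hmax; auto. }
  destruct (unif_irred n C Hirr) as [K [pi [Hpi HK]]].
  pose proof (key n C x a K pi H Hpi HK) as Hkey.
  assert (Ha0 : 0 <= a) by (unfold a; apply H0; auto).
  set (b := (1 - a) / 2).
  assert (Hb : 0 < b) by (unfold b; lra).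
  assert (HnR : 3 <= INR n) by (replace 3 with (INR 3) by (simpl; lra); apply le_INR; auto).
  assert (Hmu_up : forall t, mu n x t <= 1 / 3).
  { intros t. pose proof (mu_upper n C x a H t). pose proof (mu_nonneg n C x a H t). nra. }
  intros eps Heps.
  set (e := eps / 2).
  assert (He : 0 < e) by (unfold e; lra).
  set (delta := (b ^ K * pi * e) ^ (2 ^ K)).
  assert (Hdelta : 0 < delta).
  { unfold delta. apply pow_lt. apply Rmult_lt_0_compat; [apply Rmult_lt_0_compat|]; try lra. apply pow_lt; lra. }
  assert (HA : exists S, forall s, (S <= s)%nat -> mu n x (s + K)%nat - mu n x s < delta).
  { apply NNPP. intros Hno.
    assert (Hjump : forall S, exists s, (S <= s)%nat /\ delta <= mu n x (s + K)%nat - mu n x s).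
    { intros S. apply NNPP. intros Hno2. apply Hno. exists S. intros s Hs.
      destruct (Rlt_dec (mu n x (s + K)%nat - mu n x s) delta) as [|Hge]; auto.
      exfalso. apply Hno2. exists s. split; auto. lra. }
    assert (Hgrow : forall m, exists s, mu n x O + INR m * delta <= mu n x s).
    { induction m as [|m [s Hs]].
      - exists O. simpl. lra.
      - destruct (Hjump s) as [s' [Hs' Hj]]. exists (s' + K)%nat.
        pose proof (mu_mono n C x a H s (s' - s)). replace (s + (s' - s))%nat with s' in H2 by lia.
        rewrite S_INR. lra. }
    destruct (INR_archimed delta 1 Hdelta) as [m Hm].
    destruct (Hgrow m) as [s Hs]. pose proof (Hmu_up s). pose proof (mu_nonneg n C x a H O). lra. }
  destruct HA as [S HS]. exists S. intros s Hs.
  assert (Hsmall : forall j, (j < n)%nat -> x s j - mu n x s < e).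
  { intros j Hj. destruct (Rlt_dec (x s j - mu n x s) e) as [|Hge]; auto. exfalso.
    specialize (HS s Hs). specialize (Hkey s j Hj). fold b in Hkey.
    assert (delta <= (b ^ K * pi * (x s j - mu n x s)) ^ (2 ^ K)).
    { unfold delta. apply pow_incr. split.
      - apply Rmult_le_pos; [apply Rmult_le_pos|]; try lra. apply pow_le; lra.
      - apply Rmult_le_compat_l; [|lra]. apply Rmult_le_pos; [apply pow_le|]; lra. }
    lra. }
  pose proof (traj_inv n C x a H s) as [Hx0 [Hx1 _]].
  assert (Hsum : 1 - INR n * mu n x s <= INR n * e).
  { rewrite <- Hx1, <- vsum_const, <- vsum_minus, <- vsum_const. apply vsum_le.
    intros j Hj. specialize (Hsmall j Hj). lra. }
  pose proof (mu_upper n C x a H s) as Hmu.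
  pose proof (mu_le n x s i0 Hi0). pose proof (Hsmall i0 Hi0).
  set (q := 1 / INR n).
  assert (Hq : INR n * q = 1) by (unfold q; field; lra).
  assert (Hmq : mu n x s <= q) by nra.
  assert (Hqm : q - mu n x s <= e) by nra.
  unfold R_dist. apply Rabs_def1; unfold e in *; lra.
Qed.
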